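(* Let $k\in\{0,1,-1\}$, let $c\neq0$, $m\ge0$ and $a_1,a_2,a_3$ be real, $\hat a=(a_1,a_2,a_3)^T$, and consider the complex system for $\hat K=(K_1,K_2,K_3)^T$, $\hat P=(P_1,P_2,P_3)^T$ in complex time $t$: $$\frac{d\hat K}{dt}=\hat K\times\omega(\hat K)+\hat P\times\hat a,\qquad \frac{d\hat P}{dt}=\hat P\times\omega(\hat K)+k\,(\hat K\times\hat a),\qquad \omega(\hat K)=\Big(\frac{m}{c}K_1,\frac{m}{c}K_2,\frac1cK_3\Big)^T.$$ Suppose a solution is given near $t=0$ by Laurent series $\hat K(t)=t^{-n_1}(K_0+K_1t+K_2t^2+\cdots)$, $\hat P(t)=t^{-n_2}(P_0+P_1t+\cdots)$ with $n_1,n_2$ positive integers, $K_n,P_n\in\mathbb{C}^3$, $K_0\neq0$, $P_0\neq0$. If $\omega(K_0)\times P_0\neq0$, then $n_1=1$ and $n_2=2$.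
   Context: $\times$ is the (complex bilinear) vector product on $\mathbb{C}^3$. The system is the complexification of the Hamiltonian equations for $H=\frac12\big(\frac{H_1^2}{c_1}+\frac{H_2^2}{c_2}+\frac{H_3^2}{c_3}\big)+a\cdot h$ with $c_1=c_2=c/m$, $c_3=c$ ($m=0$ meaning $1/c_1=1/c_2=0$). *)

(* Defs.v *)
From Stdlib Require Import Reals.
From Coquelicot Require Export Coquelicot.
Open Scope R_scope.

Definition vec : Type := (C * C * C)%type.
Definition VecNM : NormedModule C_AbsRing :=
  prod_NormedModule C_AbsRing
    (prod_NormedModule C_AbsRing C_NormedModule C_NormedModule) C_NormedModule.

Definition vmk (x y z : C) : vec := (x, y, z).
Definition v1 (u : vec) : C := fst (fst u).
Definition v2 (u : vec) : C := snd (fst u).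
Definition v3 (u : vec) : C := snd u.
Definition vzero : vec := vmk 0%C 0%C 0%C.
Definition vadd (u v : vec) : vec := vmk (v1 u + v1 v)%C (v2 u + v2 v)%C (v3 u + v3 v)%C.
Definition vscal (z : C) (u : vec) : vec := vmk (z * v1 u)%C (z * v2 u)%C (z * v3 u)%C.

Definition cross (u v : vec) : vec :=
  vmk (v2 u * v3 v - v3 u * v2 v)%C
      (v3 u * v1 v - v1 u * v3 v)%C
      (v1 u * v2 v - v2 u * v1 v)%C.

Definition omega (m c : R) (K : vec) : vec :=
  vmk (RtoC (m / c) * v1 K)%C (RtoC (m / c) * v2 K)%C (RtoC (1 / c) * v3 K)%C.

Definition rhsK (m c : R) (a : vec) (K P : vec) : vec :=
  vadd (cross K (omega m c K)) (cross P a).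
Definition rhsP (k m c : R) (a : vec) (K P : vec) : vec :=
  vadd (cross P (omega m c K)) (vscal (RtoC k) (cross K a)).

Definition laurent_on (r : R) (n : nat) (coef : nat -> vec) (f : C -> vec) : Prop :=
  forall t : C, 0 < Cmod t < r ->
    exists s : vec,
      @is_series C_AbsRing VecNM (fun j => vscal (Cpow t j) (coef j)) s /\
      f t = vscal (Cinv (Cpow t n)) s.

(* Main.v *)
Require Import Defs.
From Stdlib Require Import Reals.
From Coquelicot Require Import Coquelicot.
From Stdlib Require Import Lra Psatz.
Open Scope R_scope.

Definition Big (g : C -> C) : Prop :=
  exists d B, 0 < d /\ 0 <= B /\ forall t, 0 < Cmod t < d -> Cmod (g t) <= B * Cmod t.
Definition Near (a : C) (g : C -> C) : Prop := Big (fun t => (g t - a)%C).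

Lemma Big_shrink (g : C -> C) : Big g -> exists d B, 0 < d <= 1 /\ 0 <= B /\
  forall t, 0 < Cmod t < d -> Cmod (g t) <= B * Cmod t.
Proof.
  intros [d [B [Hd [HB H]]]]. exists (Rmin d 1), B. split; [split|split]; auto.
  - apply Rmin_pos; lra.
  - apply Rmin_r.
  - intros t Ht. apply H. pose proof (Rmin_l d 1). lra.
Qed.

Lemma Big_ext (g h : C -> C) : (forall t : C, t <> 0%C -> g t = h t) -> Big g -> Big h.
Proof.
  intros E [d [B [Hd [HB H]]]]. exists d, B. repeat split; auto.
  intros t Ht. rewrite <- E. auto. intro Z. subst. rewrite Cmod_0 in Ht. lra.
Qed.

Lemma Big_add (g h : C -> C) : Big g -> Big h -> Big (fun t => g t + h t)%C.
Proof.
  intros [d1 [B1 [Hd1 [HB1 H1]]]] [d2 [B2 [Hd2 [HB2 H2]]]].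
  exists (Rmin d1 d2), (B1 + B2). split; [apply Rmin_pos; lra|split; [lra|]].
  intros t Ht. pose proof (Rmin_l d1 d2). pose proof (Rmin_r d1 d2).
  eapply Rle_trans. apply Cmod_triangle.
  assert (A := H1 t ltac:(lra)). assert (B := H2 t ltac:(lra)). lra.
Qed.

Lemma Big_mulb (g h : C -> C) : Big g -> (exists d M, 0 < d /\ forall t, 0 < Cmod t < d -> Cmod (h t) <= M) ->
  Big (fun t => h t * g t)%C.
Proof.
  intros [d1 [B1 [Hd1 [HB1 H1]]]] [d2 [M [Hd2 H2]]].
  exists (Rmin d1 d2), (Rabs M * B1). split; [apply Rmin_pos; lra|split].
  { apply Rmult_le_pos; [apply Rabs_pos|lra]. }
  intros t Ht. pose proof (Rmin_l d1 d2). pose proof (Rmin_r d1 d2).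
  rewrite Cmod_mult.
  assert (A := H1 t ltac:(lra)). assert (B := H2 t ltac:(lra)).
  pose proof (Cmod_ge_0 (h t)). pose proof (Cmod_ge_0 (g t)). pose proof (Rle_abs M).
  pose proof (Cmod_ge_0 t).
  apply Rle_trans with (Rabs M * Cmod (g t)). apply Rmult_le_compat_r; lra.
  rewrite Rmult_assoc. apply Rmult_le_compat_l. apply Rabs_pos. lra.
Qed.

Lemma Near_bounded (a : C) (g : C -> C) : Near a g -> exists d M, 0 < d /\ forall t, 0 < Cmod t < d -> Cmod (g t) <= M.
Proof.
  intros Hn. destruct (Big_shrink _ Hn) as [d [B [Hd [HB H]]]].
  exists d, (B + Cmod a). split. lra. intros t Ht.
  replace (g t) with ((g t - a) + a)%C by ring.
  eapply Rle_trans. apply Cmod_triangle. specialize (H t Ht).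
  assert (B * Cmod t <= B). { rewrite <- (Rmult_1_r B) at 2. apply Rmult_le_compat_l; lra. }
  lra.
Qed.

Lemma Near_const (a : C) : Near a (fun _ => a).
Proof. exists 1, 0. repeat split; try lra. intros t _. replace (a - a)%C with (RtoC 0) by ring.
  rewrite Cmod_0. lra. Qed.

Lemma Near_id : Near 0 (fun t : C => t).
Proof. exists 1, 1. repeat split; try lra. intros t _. replace (t - 0)%C with t by ring. lra. Qed.

Lemma Near_add (a b : C) (g h : C -> C) : Near a g -> Near b h -> Near (a + b) (fun t => g t + h t)%C.
Proof.
  intros H1 H2. eapply Big_ext; [|apply (Big_add _ _ H1 H2)]. intros t _. simpl. ring.
Qed.

Lemma Near_opp (a : C) (g : C -> C) : Near a g -> Near (- a) (fun t => - g t)%C.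
Proof.
  intros H. assert (H2 := Big_mulb _ (fun _ => (-1)%C) H).
  eapply Big_ext; [|apply H2]. intros t _. simpl. ring.
  exists 1, 1. split. lra. intros. rewrite Cmod_R, Rabs_left; lra.
Qed.

Lemma Near_mul (a b : C) (g h : C -> C) : Near a g -> Near b h -> Near (a * b) (fun t => g t * h t)%C.
Proof.
  intros H1 H2.
  assert (A := Big_mulb _ h H1 (Near_bounded _ _ H2)).
  assert (B := Big_mulb _ (fun _ => a) H2 (Near_bounded _ _ (Near_const a))).
  eapply Big_ext; [|apply (Big_add _ _ A B)]. intros t _. simpl. ring.
Qed.

Lemma Near_sub (a b : C) (g h : C -> C) : Near a g -> Near b h -> Near (a - b) (fun t => g t - h t)%C.
Proof. intros. apply Near_add; auto. apply Near_opp; auto. Qed.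

Lemma Near_pow k : (0 < k)%nat -> Near 0 (fun t : C => Cpow t k).
Proof.
  induction k; intros Hk. lia. destruct k.
  - eapply Big_ext; [|apply Near_id]. intros t _. simpl. ring.
  - eapply Big_ext; [|apply (Near_mul _ _ _ _ Near_id (IHk ltac:(lia)))]. intros t _. simpl. ring.
Qed.

Lemma Big_Near (g : C -> C) : Big g -> Near 0 g.
Proof. apply Big_ext. intros; ring. Qed.

Lemma Big_pow (g : C -> C) k : Big g -> Big (fun t => Cpow t k * g t)%C.
Proof.
  intros H. apply Big_mulb; auto. exists 1, 1. split. lra. intros t Ht.
  rewrite Cmod_pow. rewrite <- (pow1 k). apply pow_incr. pose proof (Cmod_ge_0 t). lra.
Qed.

Lemma Near_zero (a : C) (g : C -> C) : Near a g -> Big g -> a = 0%C.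
Proof.
  intros H1 H2. assert (H3 := Near_sub _ _ _ _ (Big_Near _ H2) H1).
  destruct H3 as [d [B [Hd [HB H]]]].
  destruct (Ceq_dec a 0) as [E|E]; auto. exfalso.
  apply Cmod_gt_0 in E. remember (Cmod a) as e.
  assert (He2 : 0 < e / (2 * (B + 1))). { unfold Rdiv; apply Rmult_lt_0_compat; [lra| apply Rinv_0_lt_compat; lra]. }
  pose proof (Rmin_l (d/2) (e / (2 * (B + 1)))).
  pose proof (Rmin_r (d/2) (e / (2 * (B + 1)))).
  remember (Rmin (d/2) (e / (2 * (B + 1)))) as tau.
  assert (Htau : 0 < tau). { subst tau. apply Rmin_pos. lra. lra. }
  assert (Ht : 0 < Cmod (RtoC tau) < d). { rewrite Cmod_R, Rabs_pos_eq by lra. lra. }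
  specialize (H _ Ht). rewrite Cmod_R, Rabs_pos_eq in H by lra.
  replace (g tau - g tau - (0 - a))%C with a in H by ring. rewrite <- Heqe in H.
  assert (B * tau <= (B+1) * (e / (2 * (B + 1)))). { apply Rmult_le_compat; lra. }
  replace ((B+1) * (e / (2 * (B + 1)))) with (e/2) in H4 by (field; apply Rgt_not_eq; lra). lra.
Qed.

Section Gen.
Context {V : NormedModule C_AbsRing}.

Lemma lim_norm_le (f : nat -> V) l B :
  filterlim f eventually (locally l) -> (forall n, norm (f n) <= B) -> norm l <= B.
Proof.
  intros Hl Hb. destruct (Rle_dec (norm l) B) as [|Hn]; auto. exfalso.
  apply Rnot_le_lt in Hn.
  assert (He : 0 < (norm l - B) / 2) by lra.
  assert (Hl2 := proj1 (@filterlim_locally_ball_norm C_AbsRing nat V eventually _ f l) Hl); clear Hl; rename Hl2 into Hl.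
  destruct (Hl (mkposreal _ He)) as [N HN]. specialize (HN N (le_n N)).
  unfold ball_norm in HN. simpl in HN.
  pose proof (norm_triangle_inv (f N) l). pose proof (Hb N).
  apply Rabs_le_between in H. lra.
Qed.

Lemma series_sum_bounded (a : nat -> V) s : is_series a s ->
  exists M, forall n, norm (sum_n a n) <= M.
Proof.
  intros Hs. assert (Hs2 := proj1 (@filterlim_locally_ball_norm C_AbsRing nat V eventually _ _ s) Hs); clear Hs; rename Hs2 into Hs.
  destruct (Hs (mkposreal 1 Rlt_0_1)) as [N HN].
  assert (Hfin : forall K, exists M, forall n, (n <= K)%nat -> norm (sum_n a n) <= M).
  { induction K.
    - exists (norm (sum_n a 0)). intros n Hn. replace n with 0%nat by lia. lra.
    - destruct IHK as [M HM]. exists (Rmax M (norm (sum_n a (S K)))). intros n Hn.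
      destruct (Nat.eq_dec n (S K)). subst. apply Rmax_r.
      eapply Rle_trans. apply HM. lia. apply Rmax_l. }
  destruct (Hfin N) as [M HM].
  exists (Rmax M (norm s + 1)). intros n.
  destruct (Compare_dec.le_lt_dec n N). eapply Rle_trans. apply HM; auto. apply Rmax_l.
  specialize (HN n ltac:(lia)). unfold ball_norm in HN. simpl in HN.
  pose proof (norm_triangle_inv (sum_n a n) s). apply Rabs_le_between in H.
  eapply Rle_trans. 2: apply Rmax_r. lra.
Qed.

Lemma series_terms_bounded (a : nat -> V) s : is_series a s ->
  exists M, 0 <= M /\ forall n, norm (a n) <= M.
Proof.
  intros Hs. destruct (series_sum_bounded a s Hs) as [M HM].
  exists (2 * Rabs M). split. pose proof (Rabs_pos M). lra.
  intros [|n].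
  - rewrite <- sum_O. eapply Rle_trans. apply HM. pose proof (Rle_abs M). pose proof (Rabs_pos M). lra.
  - assert (E : a (S n) = minus (sum_n a (S n)) (sum_n a n)).
    { rewrite sum_Sn. unfold minus. rewrite (plus_comm (sum_n a n)), <- plus_assoc. transitivity (plus (a (S n)) (@zero (NormedModule.AbelianMonoid C_AbsRing V))). symmetry. apply (@plus_zero_r (NormedModule.AbelianMonoid C_AbsRing V)). f_equal. symmetry. apply (@plus_opp_r (NormedModule.AbelianGroup C_AbsRing V)). }
    rewrite E. unfold minus. eapply Rle_trans. apply norm_triangle. rewrite norm_opp.
    pose proof (HM (S n)). pose proof (HM n). pose proof (Rle_abs M). lra.
Qed.

Lemma norm_sum_le (a : nat -> V) (b : nat -> R) n :
  (forall j, norm (a j) <= b j) -> norm (sum_n a n) <= sum_n b n.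
Proof.
  intros H. induction n.
  - rewrite !sum_O. auto.
  - rewrite !sum_Sn. eapply Rle_trans. apply norm_triangle. specialize (H (S n)).
    change (plus (sum_n b n) (b (S n))) with (sum_n b n + b (S n)). lra.
Qed.

End Gen.

Lemma geom_half n : sum_n (fun j => (1/2)^j) n <= 2.
Proof.
  assert (forall n, sum_n (fun j => (1/2)^j) n = 2 - (1/2)^n).
  { induction n0. rewrite sum_O. simpl. lra. rewrite sum_Sn, IHn0.
    change (plus (2 - (1/2)^n0) ((1/2)^(S n0))) with (2 - (1/2)^n0 + (1/2)^(S n0)).
    simpl. lra. }
  rewrite H. pose proof (pow_lt (1/2) n ltac:(lra)). lra.
Qed.

Lemma nat_le_pow2 i : INR (S i) * (1/4)^i <= (1/2)^i.
Proof.
  induction i. simpl. lra.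
  rewrite S_INR. simpl pow.
  assert (INR (S i) >= 1). { rewrite S_INR. pose proof (pos_INR i). lra. }
  pose proof (pow_lt (1/4) i ltac:(lra)). nra.
Qed.

Lemma pow_diff_bound (t u : C) rho i : Cmod t <= rho -> Cmod u <= rho ->
  Cmod (Cpow t (S i) - Cpow u (S i)) <= INR (S i) * rho ^ i * Cmod (t - u).
Proof.
  intros Ht Hu. induction i.
  - simpl. replace (t * 1 - u * 1)%C with (t - u)%C by ring. lra.
  - replace (Cpow t (S (S i)) - Cpow u (S (S i)))%C
      with (t * (Cpow t (S i) - Cpow u (S i)) + (t - u) * Cpow u (S i))%C
      by (simpl; ring).
    eapply Rle_trans. apply Cmod_triangle. rewrite !Cmod_mult, Cmod_pow.
    pose proof (Cmod_ge_0 t). pose proof (Cmod_ge_0 (t - u)). pose proof (Cmod_ge_0 u).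
    assert (Hr : 0 <= rho) by lra.
    assert (A : Cmod t * Cmod (Cpow t (S i) - Cpow u (S i)) <= rho * (INR (S i) * rho ^ i * Cmod (t - u))).
    { apply Rmult_le_compat; auto. apply Cmod_ge_0. }
    assert (B : Cmod (t - u) * Cmod u ^ S i <= Cmod (t - u) * rho ^ S i).
    { apply Rmult_le_compat_l; auto. apply pow_incr; lra. }
    rewrite (S_INR (S i)). simpl pow in *. lra.
Qed.

Lemma geomK K n : sum_n (fun j => K * (1/2)^j) n = K * (2 - (1/2)^n).
Proof.
  induction n. rewrite sum_O. simpl. lra. rewrite sum_Sn, IHn.
  change (plus (K * (2 - (1/2)^n)) (K * (1/2)^(S n))) with (K * (2 - (1/2)^n) + K * (1/2)^(S n)).
  simpl. lra.
Qed.

Section Gen.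
Context {V : NormedModule C_AbsRing}.

Lemma coef_bound (c : nat -> V) (rho0 M : R) : 0 < rho0 ->
  (forall j, norm (scal (Cpow (RtoC rho0) j) (c j)) <= M) ->
  forall j, norm (c j) <= M / rho0 ^ j.
Proof.
  intros Hr H j.
  assert (Hnz : Cpow (RtoC rho0) j <> RtoC 0).
  { apply Cpow_nz. intro E. apply (f_equal fst) in E. simpl in E. lra. }
  assert (E : c j = scal (Cinv (Cpow (RtoC rho0) j)) (scal (Cpow (RtoC rho0) j) (c j))).
  { rewrite scal_assoc. change (mult (/ Cpow rho0 j) (Cpow rho0 j))%C with (/ Cpow rho0 j * Cpow rho0 j)%C.
    rewrite Cinv_l by auto. symmetry. exact (@scal_one C_Ring (NormedModule.ModuleSpace C_AbsRing V) (c j)). }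
  rewrite E. eapply Rle_trans. apply (@norm_scal C_AbsRing V).
  change (abs (/ Cpow rho0 j)%C) with (Cmod (/ Cpow rho0 j)%C).
  rewrite Cmod_inv by auto. rewrite Cmod_pow, Cmod_R, Rabs_pos_eq by lra.
  pose proof (pow_lt rho0 j Hr). specialize (H j).
  unfold Rdiv. rewrite Rmult_comm. apply Rmult_le_compat_r. left. apply Rinv_0_lt_compat; auto. auto.
Qed.

End Gen.

Section Gen2.
Context {V : NormedModule C_AbsRing}.

Lemma scal_diff (x y : C) (v : V) :
  plus (scal x v) (opp (scal y v)) = scal (x - y)%C v.
Proof.
  unfold Cminus.
  rewrite (@scal_distr_r C_Ring (NormedModule.ModuleSpace C_AbsRing V)).
  f_equal. change (- y)%C with (@opp C_Ring y).
  symmetry. apply (@scal_opp_l C_Ring (NormedModule.ModuleSpace C_AbsRing V)).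
Qed.

Lemma series_lip (c : nat -> V) r : 0 < r ->
  (forall t : C, 0 < Cmod t < r -> exists s, is_series (fun j => scal (Cpow t j) (c j)) s) ->
  exists rho L, 0 < rho /\ 0 <= L /\ forall t u st su, Cmod t <= rho -> Cmod u <= rho ->
    is_series (fun j => scal (Cpow t j) (c j)) st ->
    is_series (fun j => scal (Cpow u j) (c j)) su ->
    norm (minus st su) <= L * Cmod (t - u).
Proof.
  intros Hr Hs.
  set (rho0 := r / 2).
  assert (H0 : 0 < rho0) by (unfold rho0; lra).
  destruct (Hs (RtoC rho0)) as [s0 Hs0].
  { rewrite Cmod_R, Rabs_pos_eq; unfold rho0; lra. }
  destruct (series_terms_bounded _ _ Hs0) as [M [HM0 HM]].
  assert (Hc := coef_bound c rho0 M H0 HM).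
  exists (rho0 / 4), (4 * M / rho0). split. lra. split.
  { unfold Rdiv. apply Rmult_le_pos. lra. left; apply Rinv_0_lt_compat; lra. }
  intros t u st su Ht Hu Hst Hsu.
  assert (Hd := is_series_minus _ _ _ _ Hst Hsu).
  unfold minus. apply (lim_norm_le _ _ _ Hd).
  intros n.
  set (K := Cmod (t - u) * (2 * M / rho0)).
  assert (HK : 0 <= K).
  { unfold K. apply Rmult_le_pos. apply Cmod_ge_0. unfold Rdiv. apply Rmult_le_pos. lra. left; apply Rinv_0_lt_compat; lra. }
  eapply Rle_trans. apply (norm_sum_le _ (fun j => K * (1/2)^j)).
  - intros j. rewrite scal_diff.
    eapply Rle_trans. apply (@norm_scal C_AbsRing V).
    change (abs (Cpow t j - Cpow u j)%C) with (Cmod (Cpow t j - Cpow u j)%C).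
    destruct j.
    + simpl. replace (1 - 1)%C with (RtoC 0) by ring. rewrite Cmod_0.
      rewrite Rmult_0_l. lra.
    + pose proof (pow_diff_bound t u (rho0/4) j Ht Hu) as Pd.
      specialize (Hc (S j)).
      pose proof (nat_le_pow2 j) as Np.
      pose proof (pow_lt rho0 j H0).
      pose proof (norm_ge_0 (c (S j))).
      pose proof (Cmod_ge_0 (Cpow t (S j) - Cpow u (S j))).
      pose proof (Cmod_ge_0 (t - u)).
      eapply Rle_trans. apply Rmult_le_compat; eauto.
      replace (rho0 / 4) with (rho0 * (1/4)) by lra. rewrite Rpow_mult_distr.
      unfold K. simpl pow. 
      replace (INR (S j) * (rho0 ^ j * (1 / 4) ^ j) * Cmod (t - u) * (M / (rho0 * rho0 ^ j)))
        with ((INR (S j) * (1/4)^j) * (Cmod (t - u) * M / rho0)) by (field; split; apply Rgt_not_eq; lra).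
      replace (Cmod (t - u) * (2 * M / rho0) * (1 / 2 * (1 / 2) ^ j))
        with ((1/2)^j * (Cmod (t - u) * M / rho0)) by (field; apply Rgt_not_eq; lra).
      apply Rmult_le_compat_r; auto.
      unfold Rdiv. apply Rmult_le_pos. apply Rmult_le_pos; lra. left; apply Rinv_0_lt_compat; lra.
  - rewrite geomK. pose proof (pow_lt (1/2) n ltac:(lra)).
    replace (4 * M / rho0 * Cmod (t - u)) with (2 * K) by (unfold K; field; apply Rgt_not_eq; lra).
    nra.
Qed.

Lemma series_at0 (c : nat -> V) : is_series (fun j => scal (Cpow 0 j) (c j)) (c 0%nat).
Proof.
  assert (E : forall n, sum_n (fun j => scal (Cpow 0 j) (c j)) n = c 0%nat).
  { induction n. rewrite sum_O. simpl. exact (@scal_one C_Ring (NormedModule.ModuleSpace C_AbsRing V) (c 0%nat)).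
    rewrite sum_Sn, IHn. simpl.
    transitivity (plus (c 0%nat) (@zero (NormedModule.AbelianMonoid C_AbsRing V))).
    f_equal. replace (0 * Cpow 0 n)%C with (RtoC 0) by ring.
    exact (@scal_zero_l C_Ring (NormedModule.ModuleSpace C_AbsRing V) (c (S n))).
    apply (@plus_zero_r (NormedModule.AbelianMonoid C_AbsRing V)). }
  unfold is_series. eapply filterlim_ext. intros n. symmetry. apply E.
  apply filterlim_const.
Qed.

End Gen2.

Lemma is_derive_Cpow (n : nat) (t : C) :
  @is_derive C_AbsRing (AbsRing_NormedModule C_AbsRing) (fun y : C => Cpow y n) t
    (RtoC (INR n) * Cpow t (pred n))%C.
Proof.
  induction n.
  - simpl. replace (RtoC 0 * 1)%C with (RtoC 0) by ring.
    exact (@is_derive_const C_AbsRing (AbsRing_NormedModule C_AbsRing) (RtoC 1) t).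
  - assert (H := @is_derive_mult C_AbsRing (fun y => y) (fun y => Cpow y n) t _ _
                   (@is_derive_id C_AbsRing t) IHn Cmult_comm).
    simpl in H.
    replace (RtoC (INR (S n)) * Cpow t (pred (S n)))%C
      with (@plus C_AbelianMonoid (@mult C_Ring one (Cpow t n)) (@mult C_Ring t (Cmult (RtoC (INR n)) (Cpow t (pred n))))).
    exact H.
    change (@plus C_AbelianMonoid (@mult C_Ring one (Cpow t n)) (@mult C_Ring t (Cmult (RtoC (INR n)) (Cpow t (pred n)))))
      with (1 * Cpow t n + t * (RtoC (INR n) * Cpow t (pred n)))%C.
    match goal with |- ?a = ?b => change (@eq C a b) end.
    change (@one C_Ring) with (RtoC 1).
    destruct n. simpl. ring.
    rewrite !S_INR. simpl pred. rewrite !RtoC_plus. simpl Cpow. ring.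
Qed.

Section Gen.
Context {V : NormedModule C_AbsRing}.

Lemma deriv_lip (f : C -> V) x D L d : 0 < d -> is_derive f x D ->
  (forall y, Cmod (y - x) < d -> norm (minus (f y) (f x)) <= L * Cmod (y - x)) ->
  norm D <= L.
Proof.
  intros Hd HD HL. destruct (Rle_dec (norm D) L) as [|Hn]; auto. exfalso.
  apply Rnot_le_lt in Hn.
  assert (He : 0 < (norm D - L) / 2) by lra.
  destruct HD as [_ HD].
  assert (Hx : is_filter_lim (locally x) x) by (intros P HP; exact HP).
  specialize (HD x Hx (mkposreal _ He)).
  apply (@locally_le_locally_norm C_AbsRing (AbsRing_NormedModule C_AbsRing) x) in HD.
  destruct HD as [eps Heps].
  set (h := Rmin eps d / 2).
  assert (Hh : 0 < h). { unfold h. pose proof (cond_pos eps). pose proof (Rmin_pos eps d H Hd). lra. }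
  assert (Hh1 : h < eps). { unfold h. pose proof (Rmin_l eps d). pose proof (cond_pos eps). pose proof (Rmin_pos eps d ltac:(lra) Hd). lra. }
  assert (Hh2 : h < d). { unfold h. pose proof (Rmin_r eps d). pose proof (cond_pos eps). pose proof (Rmin_pos eps d ltac:(lra) Hd). lra. }
  set (y := (x + RtoC h)%C).
  assert (Ey : Cmod (y - x) = h). { unfold y. replace (x + h - x)%C with (RtoC h) by ring. rewrite Cmod_R, Rabs_pos_eq; lra. }
  assert (Hb : ball_norm x eps y).
  { unfold ball_norm. change (Cmod (y - x) < eps). lra. }
  specialize (Heps y Hb). simpl in Heps.
  change (norm (minus y x)) with (Cmod (y - x)) in Heps. rewrite Ey in Heps.
  change (minus y x) with (y - x)%C in Heps.
  replace (y - x)%C with (RtoC h) in Heps by (unfold y; ring).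
  specialize (HL y ltac:(lra)). rewrite Ey in HL.
  pose proof (norm_triangle_inv (minus (f y) (f x)) (@scal (AbsRing.Ring C_AbsRing) (NormedModule.ModuleSpace C_AbsRing V) (RtoC h) D)) as T.
  apply Rabs_le_between in T.
  assert (N1 : norm (@scal (AbsRing.Ring C_AbsRing) (NormedModule.ModuleSpace C_AbsRing V) (RtoC h) D) <= (L + (norm D - L)/2) * h) by (destruct T as [T1 T2]; lra).
  assert (E : D = @scal (AbsRing.Ring C_AbsRing) (NormedModule.ModuleSpace C_AbsRing V) (Cinv (RtoC h)) (@scal (AbsRing.Ring C_AbsRing) (NormedModule.ModuleSpace C_AbsRing V) (RtoC h) D)).
  { rewrite (@scal_assoc C_Ring (NormedModule.ModuleSpace C_AbsRing V)).
    change (@mult C_Ring (Cinv (RtoC h)) (RtoC h)) with (Cmult (Cinv (RtoC h)) (RtoC h)).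
    rewrite Cinv_l. symmetry. exact (@scal_one C_Ring (NormedModule.ModuleSpace C_AbsRing V) D).
    intro Z. apply (f_equal fst) in Z. simpl in Z. lra. }
  assert (N2 : norm D <= / h * norm (@scal (AbsRing.Ring C_AbsRing) (NormedModule.ModuleSpace C_AbsRing V) (RtoC h) D)).
  { rewrite E at 1. eapply Rle_trans. apply (@norm_scal C_AbsRing V).
    change (abs (/ h)%C) with (Cmod (/ h)%C). rewrite Cmod_inv, Cmod_R, Rabs_pos_eq. lra. lra.
    intro Z. apply (f_equal fst) in Z. simpl in Z. lra. }
  assert (N3 : / h * norm (@scal (AbsRing.Ring C_AbsRing) (NormedModule.ModuleSpace C_AbsRing V) (RtoC h) D) <= (L + (norm D - L)/2)).
  { apply Rmult_le_reg_l with h. lra. rewrite <- Rmult_assoc, Rinv_r, Rmult_1_l by lra. lra. }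
  lra.
Qed.

End Gen.

Lemma vec_eq (u w : vec) : v1 u = v1 w -> v2 u = v2 w -> v3 u = v3 w -> u = w.
Proof. destruct u as [[a b] c], w as [[a' b'] c']. unfold v1, v2, v3; simpl. intros; subst; auto. Qed.

Lemma VecNM_scal z (u : vec) : @scal (AbsRing.Ring C_AbsRing) (NormedModule.ModuleSpace C_AbsRing VecNM) z u = vscal z u.
Proof. apply vec_eq; reflexivity. Qed.

Lemma VecNM_plus (u w : vec) : @plus (NormedModule.AbelianMonoid C_AbsRing VecNM) u w = vadd u w.
Proof. apply vec_eq; reflexivity. Qed.


Lemma mult_C1 (a b : C) : @mult C_Ring a b = Cmult a b.
Proof. reflexivity. Qed.
Lemma mult_C2 (a b : C) : @mult (AbsRing.Ring C_AbsRing) a b = Cmult a b.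
Proof. reflexivity. Qed.

Lemma Cpow_nz' (t : C) n : 0 < Cmod t -> Cpow t n <> RtoC 0.
Proof. intros H. apply Cpow_nz. intro Z. subst. rewrite Cmod_0 in H. lra. Qed.

Lemma laurent_S r n (c : nat -> vec) (f : C -> vec) : laurent_on r n c f ->
  forall t, 0 < Cmod t < r -> exists s,
    is_series (fun j => @scal (AbsRing.Ring C_AbsRing) (NormedModule.ModuleSpace C_AbsRing VecNM) (Cpow t j) (c j)) s
    /\ vscal (Cpow t n) (f t) = s.
Proof.
  intros H t Ht. destruct (H t Ht) as [s [Hs E]]. exists s. split.
  - exact Hs.
  - rewrite E. assert (Z := Cpow_nz' t n ltac:(lra)).
    apply vec_eq; unfold vscal, vmk, v1, v2, v3; simpl; field; auto.
Qed.

Lemma laurent_est r n (c : nat -> vec) (f : C -> vec) (D : C -> vec) : 0 < r ->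
  laurent_on r n c f ->
  (forall t, 0 < Cmod t < r -> @is_derive C_AbsRing VecNM f t (D t)) ->
  exists rho L, 0 < rho /\ forall t, 0 < Cmod t < rho ->
    (@norm C_AbsRing VecNM (@minus (NormedModule.AbelianGroup C_AbsRing VecNM) (vscal (Cpow t n) (f t)) (c 0%nat)) <= L * Cmod t) /\ (@norm C_AbsRing VecNM (vadd (vscal (Cpow t (S n)) (D t)) (vscal (RtoC (INR n)) (vscal (Cpow t n) (f t)))) <= L * Cmod t).
Proof.
  intros Hr HL HD.
  assert (HS := laurent_S r n c f HL).
  destruct (@series_lip VecNM c r Hr) as [rho1 [L1 [Hr1 [HL1 Lip]]]].
  { intros t Ht. destruct (HS t Ht) as [s [Hs _]]. exists s. exact Hs. }
  exists (Rmin rho1 r), L1. split. apply Rmin_pos; lra.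
  intros t Ht.
  pose proof (Rmin_l rho1 r). pose proof (Rmin_r rho1 r).
  destruct (HS t ltac:(lra)) as [st [Hst Est]].
  split.
  - rewrite Est. replace (Cmod t) with (Cmod (t - 0)) by (f_equal; ring).
    apply (Lip t 0 st (c 0%nat)); auto. lra. rewrite Cmod_0. lra.
    apply series_at0.
  - set (DS := vadd (vscal (RtoC (INR n) * Cpow t (pred n))%C (f t)) (vscal (Cpow t n) (D t))).
    assert (HDS : @is_derive C_AbsRing VecNM (fun y => vscal (Cpow y n) (f y)) t DS).
    { unfold is_derive.
      eapply filterdiff_ext_lin.
      eapply filterdiff_ext.
      2: apply (@filterdiff_scal_fct C_AbsRing (AbsRing_NormedModule C_AbsRing) VecNM t
                 (fun y => Cpow y n) f _ _ Cmult_comm (is_derive_Cpow n t) (HD t ltac:(lra))).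
      intros y. simpl. apply VecNM_scal.
      intros y. simpl. rewrite !VecNM_scal, VecNM_plus. unfold DS.
      apply vec_eq; unfold vadd, vscal, vmk, v1, v2, v3; simpl; unfold scal; simpl; unfold mult; simpl; ring. }
    assert (HB : @norm C_AbsRing VecNM DS <= L1).
    { apply (@deriv_lip VecNM (fun y : C => vscal (Cpow y n) (f y)) t DS L1 (Rmin (Cmod t) (Rmin rho1 r - Cmod t))).
      apply Rmin_pos; lra. exact HDS.
      intros y Hy.
      pose proof (Rmin_l (Cmod t) (Rmin rho1 r - Cmod t)).
      pose proof (Rmin_r (Cmod t) (Rmin rho1 r - Cmod t)).
      assert (Ty : Cmod y <= Cmod t + Cmod (y - t)).
      { replace y with (t + (y - t))%C at 1 by ring. apply Cmod_triangle. }
      assert (Ty2 : Cmod t <= Cmod y + Cmod (y - t)).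
      { replace t with (y - (y - t))%C at 1 by ring. eapply Rle_trans. apply Cmod_triangle.
        rewrite Cmod_opp. lra. }
      destruct (HS y ltac:(lra)) as [sy [Hsy Esy]].
      rewrite Esy, Est. apply (Lip y t sy st); auto; lra. }
    assert (E : vadd (vscal (Cpow t (S n)) (D t)) (vscal (RtoC (INR n)) (vscal (Cpow t n) (f t)))
                = @scal (AbsRing.Ring C_AbsRing) (NormedModule.ModuleSpace C_AbsRing VecNM) t DS).
    { transitivity (vscal t DS); [|symmetry; apply VecNM_scal]. unfold DS.
      destruct n.
      - apply vec_eq; unfold vadd, vscal, vmk, v1, v2, v3; simpl; ring.
      - apply vec_eq; unfold vadd, vscal, vmk, v1, v2, v3; simpl; ring. }
    rewrite E. eapply Rle_trans. apply (@norm_scal C_AbsRing VecNM).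
    change (abs t) with (Cmod t). rewrite Rmult_comm. apply Rmult_le_compat_r. apply Cmod_ge_0. exact HB.
Qed.

Lemma Near_Cpow k : Near (Cpow 0 k) (fun t : C => Cpow t k).
Proof.
  induction k. exact (Near_const (RtoC 1)).
  apply (Near_mul _ _ _ _ Near_id IHk).
Qed.

Lemma Near_eqv (a b : C) g : Near a g -> a = b -> Near b g.
Proof. intros H E; subst; auto. Qed.

Ltac nb := first [ eassumption | apply Near_const | apply Near_Cpow | apply Near_id
  | eapply Near_add; [nb|nb] | eapply Near_sub; [nb|nb] | eapply Near_mul; [nb|nb] | eapply Near_opp; nb ].

Lemma sqrt_ge (a b : R) : 0 <= a -> 0 <= b -> a <= sqrt (a^2 + b).
Proof.
  intros Ha Hb. apply Rle_trans with (sqrt (a^2)).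
  rewrite sqrt_pow2; lra. apply sqrt_le_1_alt. lra.
Qed.

Lemma norm_comps (u : vec) : Cmod (v1 u) <= @norm C_AbsRing VecNM u /\ Cmod (v2 u) <= @norm C_AbsRing VecNM u /\ Cmod (v3 u) <= @norm C_AbsRing VecNM u.
Proof.
  destruct u as [[x y] z]. unfold norm. simpl. unfold prod_norm. simpl.
  unfold norm. simpl. unfold prod_norm. simpl. unfold norm; simpl. unfold v1, v2, v3; simpl.
  pose proof (Cmod_ge_0 x). pose proof (Cmod_ge_0 y). pose proof (Cmod_ge_0 z).
  assert (A : Cmod x <= sqrt (Cmod x ^ 2 + Cmod y ^ 2)) by (apply sqrt_ge; nra).
  assert (B : Cmod y <= sqrt (Cmod x ^ 2 + Cmod y ^ 2)).
  { rewrite Rplus_comm. apply sqrt_ge; nra. }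
  assert (Cc : sqrt (Cmod x ^ 2 + Cmod y ^ 2) <= sqrt (sqrt (Cmod x ^ 2 + Cmod y ^ 2) ^ 2 + Cmod z ^ 2))
    by (apply sqrt_ge; [apply sqrt_pos | nra]).
  assert (D : Cmod z <= sqrt (sqrt (Cmod x ^ 2 + Cmod y ^ 2) ^ 2 + Cmod z ^ 2)).
  { rewrite Rplus_comm. apply sqrt_ge; nra. }
  simpl in *. repeat split; lra.
Qed.

Lemma comp_big (F : C -> vec) rho L : 0 < rho ->
  (forall t, 0 < Cmod t < rho -> @norm C_AbsRing VecNM (F t) <= L * Cmod t) ->
  Big (fun t => v1 (F t)) /\ Big (fun t => v2 (F t)) /\ Big (fun t => v3 (F t)).
Proof.
  intros Hr H.
  assert (G : forall t, 0 < Cmod t < rho -> @norm C_AbsRing VecNM (F t) <= Rabs L * Cmod t).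
  { intros t Ht. eapply Rle_trans. apply H; auto. apply Rmult_le_compat_r. apply Cmod_ge_0. apply Rle_abs. }
  repeat split; exists rho, (Rabs L); repeat split; auto; try apply Rabs_pos;
    intros t Ht; destruct (norm_comps (F t)) as [A [B D]]; specialize (G t Ht); lra.
Qed.

Lemma Cpow_0_S n : Cpow (RtoC 0) (S n) = RtoC 0.
Proof. simpl. ring. Qed.

Lemma Cmul_eq0 (x y : C) : x <> RtoC 0 -> (x * y = 0)%C -> y = RtoC 0.
Proof. intros Hx E. replace y with (/ x * (x * y))%C by (field; auto). rewrite E. ring. Qed.

Lemma sq_eq0 (x : C) : (x * x = 0)%C -> x = RtoC 0.
Proof. intros E. destruct (Ceq_dec x 0) as [|N]; auto. apply (Cmul_eq0 x x N E). Qed.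

Lemma alg_K (x1 x2 x3 cm ci : C) :
  (x2*(ci*x3) - x3*(cm*x2) + x1 = 0)%C -> (x3*(cm*x1) - x1*(ci*x3) + x2 = 0)%C ->
  (x1*(cm*x2) - x2*(cm*x1) + x3 = 0)%C -> x1 = 0%C /\ x2 = 0%C /\ x3 = 0%C.
Proof.
  intros E1 E2 E3.
  assert (Z3 : x3 = 0%C) by (rewrite <- E3; ring). subst x3.
  split. rewrite <- E1; ring. split. rewrite <- E2; ring. auto.
Qed.

Lemma alg_final (p1 p2 p3 w1 w2 w3 N A1 A2 A3 : C) : N <> RtoC 0 ->
  (A1*A1 + A2*A2 + A3*A3)%C <> RtoC 0 ->
  (p2*w3 - p3*w2 + N*p1 = 0)%C -> (p3*w1 - p1*w3 + N*p2 = 0)%C -> (p1*w2 - p2*w1 + N*p3 = 0)%C ->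
  (p2*A3 - p3*A2 = 0)%C -> (p3*A1 - p1*A3 = 0)%C -> (p1*A2 - p2*A1 = 0)%C ->
  p1 = 0%C /\ p2 = 0%C /\ p3 = 0%C.
Proof.
  intros HN HA F1 F2 F3 G1 G2 G3.
  assert (PP : (p1*p1 + p2*p2 + p3*p3 = 0)%C).
  { apply (Cmul_eq0 N); auto.
    replace (N * (p1*p1 + p2*p2 + p3*p3))%C with
      (p1 * (p2*w3 - p3*w2 + N*p1) + p2 * (p3*w1 - p1*w3 + N*p2) + p3 * (p1*w2 - p2*w1 + N*p3))%C by ring.
    rewrite F1, F2, F3. ring. }
  assert (D : (p1*A1 + p2*A2 + p3*A3 = 0)%C).
  { apply sq_eq0.
    replace ((p1*A1 + p2*A2 + p3*A3) * (p1*A1 + p2*A2 + p3*A3))%C with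
      ((p1*p1 + p2*p2 + p3*p3) * (A1*A1 + A2*A2 + A3*A3)
        - ((p2*A3 - p3*A2)*(p2*A3 - p3*A2) + (p3*A1 - p1*A3)*(p3*A1 - p1*A3) + (p1*A2 - p2*A1)*(p1*A2 - p2*A1)))%C by ring.
    rewrite PP, G1, G2, G3. ring. }
  split; [|split]; apply (Cmul_eq0 (A1*A1 + A2*A2 + A3*A3)%C); auto.
  - replace ((A1*A1 + A2*A2 + A3*A3) * p1)%C with
      (A2 * (p1*A2 - p2*A1) - A3 * (p3*A1 - p1*A3) + A1 * (p1*A1 + p2*A2 + p3*A3))%C by ring.
    rewrite G3, G2, D. ring.
  - replace ((A1*A1 + A2*A2 + A3*A3) * p2)%C with
      (A3 * (p2*A3 - p3*A2) - A1 * (p1*A2 - p2*A1) + A2 * (p1*A1 + p2*A2 + p3*A3))%C by ring.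
    rewrite G1, G3, D. ring.
  - replace ((A1*A1 + A2*A2 + A3*A3) * p3)%C with
      (A1 * (p3*A1 - p1*A3) - A2 * (p2*A3 - p3*A2) + A3 * (p1*A1 + p2*A2 + p3*A3))%C by ring.
    rewrite G2, G1, D. ring.
Qed.

Ltac cb := cbn [v1 v2 v3 vmk vscal vadd cross omega rhsK rhsP fst snd].
Ltac cbh H := cbn [v1 v2 v3 vmk vscal vadd cross omega rhsK rhsP fst snd] in H.

Ltac use0 E := match type of E with ?Y = _ =>
  first [ transitivity Y; [ring | exact E] | transitivity (- Y)%C; [ring | rewrite E; ring] ] end.

Tactic Notation "czero" ident(E) constr(v) constr(Hf) constr(B) :=
  eassert (E : (_ : C) = RtoC 0);
  [ eapply (Near_zero _ (fun t => v (Hf t)));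
    [ cb; nb | eapply Big_ext; [| exact B]; intros ? _; cb; simpl; ring ]
  | rewrite ?Cpow_0_S in E ].

Lemma RtoC_neq0 (x : R) : x <> 0 -> RtoC x <> RtoC 0.
Proof. intros H Z. apply (f_equal fst) in Z. exact (H Z). Qed.

Theorem lemma1 (k c m a1 a2 a3 : R) (n1 n2 : nat) (r : R)
  (Kf Pf : C -> vec) (Kc Pc : nat -> vec) :
  (k = 0 \/ k = 1 \/ k = -1) -> c <> 0 -> 0 <= m ->
  (0 < n1)%nat -> (0 < n2)%nat -> 0 < r ->
  (forall t : C, 0 < Cmod t < r ->
     @is_derive C_AbsRing VecNM Kf t
       (rhsK m c (vmk (RtoC a1) (RtoC a2) (RtoC a3)) (Kf t) (Pf t)) /\
     @is_derive C_AbsRing VecNM Pf t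
       (rhsP k m c (vmk (RtoC a1) (RtoC a2) (RtoC a3)) (Kf t) (Pf t))) ->
  laurent_on r n1 Kc Kf -> laurent_on r n2 Pc Pf ->
  Kc 0%nat <> vzero -> Pc 0%nat <> vzero ->
  cross (omega m c (Kc 0%nat)) (Pc 0%nat) <> vzero ->
  n1 = 1%nat /\ n2 = 2%nat.
Proof.
  intros Hk Hc Hm Hn1 Hn2 Hr HD HLK HLP HK0 HP0 Hcr.
  destruct (laurent_est r n1 Kc Kf (fun t => rhsK m c (vmk (RtoC a1) (RtoC a2) (RtoC a3)) (Kf t) (Pf t)) Hr HLK (fun t Ht => proj1 (HD t Ht))) as [rK [LK [HrK EK]]].
  destruct (laurent_est r n2 Pc Pf (fun t => rhsP k m c (vmk (RtoC a1) (RtoC a2) (RtoC a3)) (Kf t) (Pf t)) Hr HLP (fun t Ht => proj2 (HD t Ht))) as [rP [LP [HrP EP]]].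
  destruct (comp_big _ rK LK HrK (fun t Ht => proj1 (EK t Ht))) as [NK1 [NK2 NK3]].
  destruct (comp_big _ rK LK HrK (fun t Ht => proj2 (EK t Ht))) as [BK1 [BK2 BK3]].
  destruct (comp_big _ rP LP HrP (fun t Ht => proj1 (EP t Ht))) as [NP1 [NP2 NP3]].
  destruct (comp_big _ rP LP HrP (fun t Ht => proj2 (EP t Ht))) as [BP1 [BP2 BP3]].
  change (Near (v1 (Kc 0%nat)) (fun t => v1 (vscal (Cpow t n1) (Kf t)))) in NK1.
  change (Near (v2 (Kc 0%nat)) (fun t => v2 (vscal (Cpow t n1) (Kf t)))) in NK2.
  change (Near (v3 (Kc 0%nat)) (fun t => v3 (vscal (Cpow t n1) (Kf t)))) in NK3.
  change (Near (v1 (Pc 0%nat)) (fun t => v1 (vscal (Cpow t n2) (Pf t)))) in NP1.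
  change (Near (v2 (Pc 0%nat)) (fun t => v2 (vscal (Cpow t n2) (Pf t)))) in NP2.
  change (Near (v3 (Pc 0%nat)) (fun t => v3 (vscal (Cpow t n2) (Pf t)))) in NP3.
  cbh NK1. cbh NK2. cbh NK3. cbh NP1. cbh NP2. cbh NP3.
  destruct n2 as [|n2]; [lia|].
  destruct n1 as [|[|n1]]; [lia| |exfalso].
  2:{
    czero E1 v1 (fun t => vadd (vadd (cross (vscal (Cpow t (S n2)) (Pf t)) (omega m c (vscal (Cpow t (S (S n1))) (Kf t))))
       (vscal (RtoC k * Cpow t (S n2)) (cross (vscal (Cpow t (S (S n1))) (Kf t)) (vmk (RtoC a1) (RtoC a2) (RtoC a3)))))
       (vscal (RtoC (INR (S n2)) * Cpow t (S n1)) (vscal (Cpow t (S n2)) (Pf t)))) (Big_pow _ (S n1) BP1).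
    czero E2 v2 (fun t => vadd (vadd (cross (vscal (Cpow t (S n2)) (Pf t)) (omega m c (vscal (Cpow t (S (S n1))) (Kf t))))
       (vscal (RtoC k * Cpow t (S n2)) (cross (vscal (Cpow t (S (S n1))) (Kf t)) (vmk (RtoC a1) (RtoC a2) (RtoC a3)))))
       (vscal (RtoC (INR (S n2)) * Cpow t (S n1)) (vscal (Cpow t (S n2)) (Pf t)))) (Big_pow _ (S n1) BP2).
    czero E3 v3 (fun t => vadd (vadd (cross (vscal (Cpow t (S n2)) (Pf t)) (omega m c (vscal (Cpow t (S (S n1))) (Kf t))))
       (vscal (RtoC k * Cpow t (S n2)) (cross (vscal (Cpow t (S (S n1))) (Kf t)) (vmk (RtoC a1) (RtoC a2) (RtoC a3)))))
       (vscal (RtoC (INR (S n2)) * Cpow t (S n1)) (vscal (Cpow t (S n2)) (Pf t)))) (Big_pow _ (S n1) BP3).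
    apply Hcr. unfold vzero. apply vec_eq; cb; [use0 E1 | use0 E2 | use0 E3].
  }
    czero F1 v1 (fun t => vadd (vadd (cross (vscal (Cpow t (S n2)) (Pf t)) (omega m c (vscal (Cpow t 1) (Kf t)))) (vscal (RtoC k * Cpow t (S n2)) (cross (vscal (Cpow t 1) (Kf t)) (vmk (RtoC a1) (RtoC a2) (RtoC a3))))) (vscal (RtoC (INR (S n2))) (vscal (Cpow t (S n2)) (Pf t)))) (BP1).
    czero F2 v2 (fun t => vadd (vadd (cross (vscal (Cpow t (S n2)) (Pf t)) (omega m c (vscal (Cpow t 1) (Kf t)))) (vscal (RtoC k * Cpow t (S n2)) (cross (vscal (Cpow t 1) (Kf t)) (vmk (RtoC a1) (RtoC a2) (RtoC a3))))) (vscal (RtoC (INR (S n2))) (vscal (Cpow t (S n2)) (Pf t)))) (BP2).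
    czero F3 v3 (fun t => vadd (vadd (cross (vscal (Cpow t (S n2)) (Pf t)) (omega m c (vscal (Cpow t 1) (Kf t)))) (vscal (RtoC k * Cpow t (S n2)) (cross (vscal (Cpow t 1) (Kf t)) (vmk (RtoC a1) (RtoC a2) (RtoC a3))))) (vscal (RtoC (INR (S n2))) (vscal (Cpow t (S n2)) (Pf t)))) (BP3).
  destruct n2 as [|[|n2]].
  - exfalso.
    czero G1 v1 (fun t => vadd (vadd (cross (vscal (Cpow t 1) (Kf t)) (omega m c (vscal (Cpow t 1) (Kf t)))) (vscal t (cross (vscal (Cpow t 1) (Pf t)) (vmk (RtoC a1) (RtoC a2) (RtoC a3))))) (vscal (RtoC 1) (vscal (Cpow t 1) (Kf t)))) (BK1).
    czero G2 v2 (fun t => vadd (vadd (cross (vscal (Cpow t 1) (Kf t)) (omega m c (vscal (Cpow t 1) (Kf t)))) (vscal t (cross (vscal (Cpow t 1) (Pf t)) (vmk (RtoC a1) (RtoC a2) (RtoC a3))))) (vscal (RtoC 1) (vscal (Cpow t 1) (Kf t)))) (BK2).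
    czero G3 v3 (fun t => vadd (vadd (cross (vscal (Cpow t 1) (Kf t)) (omega m c (vscal (Cpow t 1) (Kf t)))) (vscal t (cross (vscal (Cpow t 1) (Pf t)) (vmk (RtoC a1) (RtoC a2) (RtoC a3))))) (vscal (RtoC 1) (vscal (Cpow t 1) (Kf t)))) (BK3).
    destruct (alg_K (v1 (Kc 0%nat)) (v2 (Kc 0%nat)) (v3 (Kc 0%nat)) (RtoC (m/c)) (RtoC (1/c))) as [X1 [X2 X3]];
      [use0 G1 | use0 G2 | use0 G3 |].
    apply HK0. unfold vzero. apply vec_eq; cb; assumption.
  - split; reflexivity.
  - exfalso.
    destruct (Req_dec (a1*a1 + a2*a2 + a3*a3) 0) as [Ha|Ha].
    + assert (a1 = 0 /\ a2 = 0 /\ a3 = 0) as [-> [-> ->]] by (repeat split; nra).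
      czero H1 v1 (fun t => vadd (cross (vscal (Cpow t 1) (Kf t)) (omega m c (vscal (Cpow t 1) (Kf t)))) (vscal (RtoC 1) (vscal (Cpow t 1) (Kf t)))) BK1.
      czero H2 v2 (fun t => vadd (cross (vscal (Cpow t 1) (Kf t)) (omega m c (vscal (Cpow t 1) (Kf t)))) (vscal (RtoC 1) (vscal (Cpow t 1) (Kf t)))) BK2.
      czero H3 v3 (fun t => vadd (cross (vscal (Cpow t 1) (Kf t)) (omega m c (vscal (Cpow t 1) (Kf t)))) (vscal (RtoC 1) (vscal (Cpow t 1) (Kf t)))) BK3.
      destruct (alg_K (v1 (Kc 0%nat)) (v2 (Kc 0%nat)) (v3 (Kc 0%nat)) (RtoC (m/c)) (RtoC (1/c))) as [X1 [X2 X3]];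
        [use0 H1 | use0 H2 | use0 H3 |].
      apply HK0. unfold vzero. apply vec_eq; cb; assumption.
    + czero H1 v1 (fun t => vadd (vscal (Cpow t (S n2)) (vadd (cross (vscal (Cpow t 1) (Kf t)) (omega m c (vscal (Cpow t 1) (Kf t)))) (vscal (RtoC 1) (vscal (Cpow t 1) (Kf t))))) (cross (vscal (Cpow t (S (S (S n2)))) (Pf t)) (vmk (RtoC a1) (RtoC a2) (RtoC a3)))) (Big_pow _ (S n2) BK1).
      czero H2 v2 (fun t => vadd (vscal (Cpow t (S n2)) (vadd (cross (vscal (Cpow t 1) (Kf t)) (omega m c (vscal (Cpow t 1) (Kf t)))) (vscal (RtoC 1) (vscal (Cpow t 1) (Kf t))))) (cross (vscal (Cpow t (S (S (S n2)))) (Pf t)) (vmk (RtoC a1) (RtoC a2) (RtoC a3)))) (Big_pow _ (S n2) BK2).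
      czero H3 v3 (fun t => vadd (vscal (Cpow t (S n2)) (vadd (cross (vscal (Cpow t 1) (Kf t)) (omega m c (vscal (Cpow t 1) (Kf t)))) (vscal (RtoC 1) (vscal (Cpow t 1) (Kf t))))) (cross (vscal (Cpow t (S (S (S n2)))) (Pf t)) (vmk (RtoC a1) (RtoC a2) (RtoC a3)))) (Big_pow _ (S n2) BK3).
      assert (HN : RtoC (INR (S (S (S n2)))) <> RtoC 0).
      { apply RtoC_neq0. pose proof (lt_0_INR (S (S (S n2))) ltac:(lia)). lra. }
      assert (HA : (RtoC a1 * RtoC a1 + RtoC a2 * RtoC a2 + RtoC a3 * RtoC a3)%C <> RtoC 0).
      { rewrite <- !RtoC_mult, <- !RtoC_plus. apply RtoC_neq0. exact Ha. }
      destruct (alg_final (v1 (Pc 0%nat)) (v2 (Pc 0%nat)) (v3 (Pc 0%nat)) (RtoC (m/c) * v1 (Kc 0%nat)) (RtoC (m/c) * v2 (Kc 0%nat)) (RtoC (1/c) * v3 (Kc 0%nat)) _ _ _ _ HN HA) as [X1 [X2 X3]];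
        [use0 F1 | use0 F2 | use0 F3 | use0 H1 | use0 H2 | use0 H3 |].
      apply HP0. unfold vzero. apply vec_eq; cb; assumption.
Qed.
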